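(* Let $\Lambda=\{0,1\}^2\subset\mathbb{Z}^2$ (points $(x,y)$) and let $\mu$ be the probability measure on $\{0,1\}^\Lambda$ giving probability $1/4$ to each of the following four configurations (listing the occupied sites, all others being $0$): $\eta^{(1)}$: $\{(0,0)\}$; $\eta^{(2)}$: $\{(0,0),(0,1),(1,0)\}$; $\eta^{(3)}$: $\{(0,1),(1,1)\}$; $\eta^{(4)}$: $\{(1,0),(1,1)\}$. Then $\mu$ is LTI, but there is no probability measure on configurations of a $3\times3$ square $\Lambda'\supset\Lambda$ whose marginal on each of the four $2\times 2$ subsquares of $\Lambda'$ is the corresponding translate of $\mu$; in particular $\mu$ has no translation invariant extension to $\{0,1\}^{\mathbb{Z}^2}$.
   Context: A probability measure $\mu_\Lambda$ on $\{0,1\}^\Lambda$, $\Lambda\subset\mathbb{Z}^d$, is LTI if for all $A,A'\subset\Lambda$ with $A'$ a translate of $A$, the marginal on $\{0,1\}^{A'}$ is the translate of the marginal on $\{0,1\}^A$. A translation invariant extension is a $\mathbb{Z}^2$-translation invariant probability measure on $\{0,1\}^{\mathbb{Z}^2}$ with marginal $\mu$ on $\Lambda$. *)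

(* Defs.v *)
From Stdlib Require Import Reals ZArith List Bool.
Import ListNotations.
Open Scope R_scope.

Definition site := (Z * Z)%type.
Definition site_eqb (x y : site) : bool :=
  (Z.eqb (fst x) (fst y) && Z.eqb (snd x) (snd y))%bool.
Definition vadd (v x : site) : site := ((fst v + fst x)%Z, (snd v + snd x)%Z).

(* A configuration is a function Z^2 -> {0,1}; a configuration on a finite
   region A is represented by any function, only its values on A matter. *)
Definition config := site -> bool.
Definition upd (s : config) (a : site) (b : bool) : config :=
  fun x => if site_eqb x a then b else s x.

(* canonical enumeration of {0,1}^A (configurations that are 0 off A);
   for A without duplicates each element of {0,1}^A occurs exactly once *)
Fixpoint configs (A : list site) : list config :=
  match A with
  | nil => [fun _ => false]
  | a :: A' => flat_map (fun s => [upd s a false; upd s a true]) (configs A')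
  end.

Definition agreeb (B : list site) (s t : config) : bool :=
  forallb (fun x => Bool.eqb (s x) (t x)) B.

Definition sumR (l : list R) : R := fold_right Rplus 0 l.

Definition measure := config -> R.

Definition is_prob (nu : measure) (A : list site) : Prop :=
  (forall s, In s (configs A) -> 0 <= nu s) /\ sumR (map nu (configs A)) = 1.

Definition marg (nu : measure) (A B : list site) (xi : config) : R :=
  sumR (map (fun s => if agreeb B s xi then nu s else 0) (configs A)).

Definition tshift (xi : config) (v : site) : config := fun x => xi (vadd x v).

Definition LTI (nu : measure) (A : list site) : Prop :=
  forall (B : list site) (v : site),
    incl B A -> incl (map (vadd v) B) A ->
    forall xi : config, marg nu A (map (vadd v) B) xi = marg nu A B (tshift xi v).

Definition Lam : list site := [(0,0)%Z; (0,1)%Z; (1,0)%Z; (1,1)%Z].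

Definition sq3 (a b : Z) : list site :=
  flat_map (fun i => map (fun j => ((a + i)%Z, (b + j)%Z)) [0%Z; 1%Z; 2%Z])
           [0%Z; 1%Z; 2%Z].

Definition occ (l : list site) : config := fun x => existsb (site_eqb x) l.

Definition eta1 : config := occ [(0,0)%Z].
Definition eta2 : config := occ [(0,0)%Z; (0,1)%Z; (1,0)%Z].
Definition eta3 : config := occ [(0,1)%Z; (1,1)%Z].
Definition eta4 : config := occ [(1,0)%Z; (1,1)%Z].

Definition mu : measure := fun s =>
  (if agreeb Lam s eta1 then 1/4 else 0) + (if agreeb Lam s eta2 then 1/4 else 0)
  + (if agreeb Lam s eta3 then 1/4 else 0) + (if agreeb Lam s eta4 then 1/4 else 0).

(* A translation invariant probability measure on {0,1}^(Z^2), described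
   (via Kolmogorov's extension theorem) by its consistent family of
   cylinder probabilities P A xi = Prob(config agrees with xi on A),
   A a finite list of sites; its marginal on Lam must be nu. *)
Definition TIExtension (nu : measure) : Prop :=
  exists P : list site -> config -> R,
    (forall A xi, 0 <= P A xi) /\
    (forall xi, P nil xi = 1) /\
    (forall A B xi, (forall x, In x A <-> In x B) -> P A xi = P B xi) /\
    (forall A xi xi', (forall x, In x A -> xi x = xi' x) -> P A xi = P A xi') /\
    (forall a A xi, ~ In a A ->
        P A xi = P (a :: A) (upd xi a false) + P (a :: A) (upd xi a true)) /\
    (forall A v xi, P (map (vadd v) A) xi = P A (tshift xi v)) /\
    (forall xi, P Lam xi = marg nu Lam Lam xi).

(* Main.v *)
Require Import Defs.
From Stdlib Require Import Reals ZArith List.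
From Stdlib Require Import Lra Lia Bool FunctionalExtensionality.
Import ListNotations.
Open Scope R_scope.

Lemma site_eqb_spec x y : site_eqb x y = true <-> x = y.
Proof.
  destruct x as [x1 x2], y as [y1 y2]; unfold site_eqb; simpl.
  rewrite andb_true_iff, !Z.eqb_eq. split.
  - intros [-> ->]; reflexivity.
  - intros H; inversion H; auto.
Qed.

Lemma site_eqb_refl x : site_eqb x x = true.
Proof. apply site_eqb_spec; reflexivity. Qed.

Definition inb (x : site) (l : list site) : bool := existsb (site_eqb x) l.

Lemma inb_In x l : inb x l = true <-> In x l.
Proof.
  unfold inb. rewrite existsb_exists. split.
  - intros [y [Hy E]]. apply site_eqb_spec in E. subst; auto.
  - intros H. exists x. split; auto. apply site_eqb_refl.
Qed.

Lemma agreeb_spec B s t : agreeb B s t = true <-> (forall x, In x B -> s x = t x).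
Proof.
  unfold agreeb. rewrite forallb_forall. split; intros H x Hx; specialize (H x Hx).
  - apply Bool.eqb_prop; auto.
  - rewrite H; apply Bool.eqb_reflx.
Qed.

Lemma agreeb_ext C C' s z z' : (forall x, In x C <-> In x C') ->
  (forall x, In x C -> z x = z' x) -> agreeb C s z = agreeb C' s z'.
Proof.
  intros HC Hz. apply eq_iff_eq_true. rewrite !agreeb_spec. split; intros H x Hx.
  - rewrite <- Hz by (apply HC; auto). apply H. apply HC; auto.
  - rewrite Hz by auto. apply H. apply HC; auto.
Qed.

Lemma agreeb_set B B' s t : (forall x, In x B <-> In x B') -> agreeb B s t = agreeb B' s t.
Proof. intros H. apply agreeb_ext; auto. Qed.

Lemma agreeb_upd_notin B s t a c : ~ In a B -> agreeb B (upd s a c) t = agreeb B s t.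
Proof.
  intros Ha. apply eq_iff_eq_true. rewrite !agreeb_spec. unfold upd.
  split; intros H x Hx; specialize (H x Hx); destruct (site_eqb x a) eqn:E; auto;
    apply site_eqb_spec in E; subst; contradiction.
Qed.

Lemma upd_same s a c : upd s a c a = c.
Proof. unfold upd. rewrite site_eqb_refl. reflexivity. Qed.

Lemma upd_eq_self m a c : m a = c -> upd m a c = m.
Proof.
  intros H. apply functional_extensionality. intros x. unfold upd.
  destruct (site_eqb x a) eqn:E; auto. apply site_eqb_spec in E; subst; auto.
Qed.

Lemma marg_ext nu A C C' z z' : (forall x, In x C <-> In x C') ->
  (forall x, In x C -> z x = z' x) -> marg nu A C z = marg nu A C' z'.
Proof.
  intros HC Hz. unfold marg. f_equal. apply map_ext. intros s.
  rewrite (agreeb_ext C C' s z z'); auto.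
Qed.

Lemma sumR_plus {A} (f g : A -> R) l :
  sumR (map (fun x => f x + g x) l) = sumR (map f l) + sumR (map g l).
Proof. induction l; simpl; [ring | rewrite IHl; ring]. Qed.

Lemma sumR_zero {A} (f : A -> R) l : (forall x, In x l -> f x = 0) -> sumR (map f l) = 0.
Proof.
  induction l; simpl; intros H; [reflexivity|].
  rewrite H by auto. rewrite IHl by auto. ring.
Qed.

Lemma sumR_nonneg {A} (f : A -> R) l : (forall x, In x l -> 0 <= f x) -> 0 <= sumR (map f l).
Proof.
  induction l; simpl; intros H; [lra|].
  assert (0 <= f a) by auto. assert (0 <= sumR (map f l)) by auto. lra.
Qed.

Lemma sumR_le {A} (f g : A -> R) l : (forall x, In x l -> f x <= g x) ->
  sumR (map f l) <= sumR (map g l).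
Proof.
  induction l; simpl; intros H; [lra|].
  assert (f a <= g a) by auto. assert (sumR (map f l) <= sumR (map g l)) by auto. lra.
Qed.

Lemma sumR_exchange {A B} (F : A -> B -> R) K L :
  sumR (map (fun k => sumR (map (F k) L)) K) =
  sumR (map (fun s => sumR (map (fun k => F k s) K)) L).
Proof.
  induction K as [|k K IH]; simpl.
  - symmetry. apply sumR_zero. auto.
  - rewrite IH. rewrite <- sumR_plus. reflexivity.
Qed.

Lemma sumR_flat2 (f : config -> R) a L :
  sumR (map f (flat_map (fun s => [upd s a false; upd s a true]) L)) =
  sumR (map (fun s => f (upd s a false) + f (upd s a true)) L).
Proof. induction L; simpl; [reflexivity| rewrite IHL; ring]. Qed.

Lemma inner_ge {A} (g : A -> bool) x K : existsb g K = true -> 0 <= x ->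
  x <= sumR (map (fun k => if g k then x else 0) K).
Proof.
  induction K as [|k K IH]; simpl; intros H Hx; [discriminate|].
  destruct (g k) eqn:E.
  - assert (0 <= sumR (map (fun k => if g k then x else 0) K)).
    { apply sumR_nonneg. intros y _. destruct (g y); lra. }
    lra.
  - simpl in H. specialize (IH H Hx). lra.
Qed.

Definition merge (D : list site) (s xi : config) : config :=
  fun x => if inb x D then s x else xi x.

Lemma merge_upd a D s c xi : merge (a :: D) (upd s a c) xi = upd (merge D s xi) a c.
Proof.
  apply functional_extensionality. intros x. unfold merge, upd, inb. simpl.
  destruct (site_eqb x a); simpl; reflexivity.
Qed.

Lemma G (P : list site -> config -> R)
 (H3 : forall A B xi, (forall x, In x A <-> In x B) -> P A xi = P B xi)
 (H5 : forall a A xi, ~ In a A ->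
        P A xi = P (a :: A) (upd xi a false) + P (a :: A) (upd xi a true)) :
 forall A, NoDup A -> forall B C xi, incl B A -> (forall x, In x A -> ~ In x C) ->
 sumR (map (fun s => if agreeb B s xi then P (A ++ C) (merge A s xi) else 0) (configs A))
 = P (B ++ C) xi.
Proof.
  induction A as [|a A' IH]; intros HA B C xi HB HC.
  - destruct B as [|b B']. 2:{ exfalso. apply (HB b); left; auto. }
    simpl. unfold merge, inb. simpl. rewrite Rplus_0_r. reflexivity.
  - inversion HA as [|? ? Hnotin HA']; subst.
    cbn [configs]. rewrite sumR_flat2.
    destruct (inb a B) eqn:EaB.
    + apply inb_In in EaB.
      set (B0 := filter (fun x => negb (site_eqb x a)) B).
      assert (HB0in : forall x, In x B0 <-> In x B /\ x <> a).
      { intros x. unfold B0. rewrite filter_In. destruct (site_eqb x a) eqn:E; simpl.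
        - apply site_eqb_spec in E. subst. split; [intros [_ H]; discriminate| intros [_ H]; congruence].
        - split; [intros [H _]; split; auto; intros ->; rewrite site_eqb_refl in E; discriminate
                 | intros [H _]; auto]. }
      assert (HaB0 : ~ In a B0) by (rewrite HB0in; tauto).
      assert (HB0 : incl B0 A').
      { intros x Hx. apply HB0in in Hx. destruct Hx as [Hx Hxa].
        destruct (HB x Hx) as [->|]; [congruence|auto]. }
      assert (Hagree : forall s, agreeb B s xi = Bool.eqb (s a) (xi a) && agreeb B0 s xi).
      { intros s. rewrite (agreeb_set B (a :: B0)). reflexivity.
        intros x. simpl. rewrite HB0in. split.
        - intros Hx. destruct (site_eqb x a) eqn:E.
          + apply site_eqb_spec in E; auto.
          + right. split; auto. intros ->. rewrite site_eqb_refl in E; discriminate.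
        - intros [->|[Hx _]]; auto. }
      assert (Hdisj : forall x, In x A' -> ~ In x (a :: C)).
      { intros x Hx [->|Hc]; [contradiction| apply (HC x); [right|]; auto]. }
      rewrite <- (H3 (B0 ++ a :: C) (B ++ C)).
      2:{ intros x. rewrite !in_app_iff. simpl. rewrite HB0in. split.
          - intros [[H _]|[->|H]]; auto.
          - intros [H|H]; auto. destruct (site_eqb x a) eqn:E.
            + apply site_eqb_spec in E; auto.
            + left. split; auto. intros ->. rewrite site_eqb_refl in E; discriminate. }
      rewrite <- (IH HA' B0 (a :: C) xi HB0 Hdisj).
      f_equal. apply map_ext. intros s.
      rewrite !Hagree, !upd_same, !(agreeb_upd_notin B0) by auto.
      rewrite !merge_upd.
      assert (Hm : merge A' s xi a = xi a).
      { unfold merge. destruct (inb a A') eqn:E; auto. apply inb_In in E; contradiction. }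
      assert (HP : P (a :: A' ++ C) (merge A' s xi) = P (A' ++ a :: C) (merge A' s xi)).
      { apply H3. intros x. simpl. rewrite !in_app_iff. simpl. tauto. }
      cbn [app].
      destruct (xi a) eqn:Exa; destruct (agreeb B0 s xi); simpl; try ring;
        rewrite upd_eq_self by auto; rewrite HP; ring.
    + assert (HaB : ~ In a B) by (intro H; apply inb_In in H; congruence).
      assert (HB' : incl B A') by (intros x Hx; destruct (HB x Hx) as [->|]; [contradiction|auto]).
      rewrite <- (IH HA' B C xi HB' (fun x Hx => HC x (or_intror Hx))).
      f_equal. apply map_ext. intros s.
      rewrite !agreeb_upd_notin by auto. rewrite !merge_upd. cbn [app].
      destruct (agreeb B s xi); [|ring].
      symmetry. apply H5. intro H. apply in_app_or in H. destruct H as [H|H].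
      * contradiction.
      * apply (HC a); [left; auto| auto].
Qed.

Definition is_eta (s : config) : bool :=
  agreeb Lam s eta1 || agreeb Lam s eta2 || agreeb Lam s eta3 || agreeb Lam s eta4.

Lemma mu_zero s : is_eta s = false -> mu s = 0.
Proof.
  unfold is_eta, mu. intros H. rewrite !orb_false_iff in H.
  destruct H as [[[-> ->] ->] ->]. lra.
Qed.

Lemma is_eta_agree s p : agreeb Lam s p = true -> is_eta s = is_eta p.
Proof.
  intros H. rewrite agreeb_spec in H.
  assert (K : forall e, agreeb Lam s e = agreeb Lam p e).
  { intros e. apply eq_iff_eq_true. rewrite !agreeb_spec. split; intros H' x Hx.
    - rewrite <- H by auto. auto.
    - rewrite H by auto. auto. }
  unfold is_eta. rewrite !K. reflexivity.
Qed.

Definition offs : list (Z*Z) := [(0,0);(0,1);(1,0);(1,1)]%Z.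
Definition bad : list config := filter (fun p => negb (is_eta p)) (configs Lam).
Definition vsub (x v : site) : site := ((fst x - fst v)%Z, (snd x - snd v)%Z).
Definition unshift (p : config) (v : site) : config := fun x => p (vsub x v).
Definition Kl : list ((Z*Z) * config) := flat_map (fun o => map (fun p => (o,p)) bad) offs.
Definition vof (a b : Z) (o : Z*Z) : site := ((a + fst o)%Z, (b + snd o)%Z).
Definition Qo a b o := map (vadd (vof a b o)) Lam.
Definition xk a b (k : (Z*Z)*config) := unshift (snd k) (vof a b (fst k)).
Definition check1 a b := forallb (fun s => existsb (fun k =>
   agreeb (Qo a b (fst k)) s (xk a b k)) Kl) (configs (sq3 a b)).

Lemma tshift_unshift p v : tshift (unshift p v) v = p.
Proof.
  apply functional_extensionality. intros [x1 x2]. unfold tshift, unshift, vsub, vadd.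
  simpl. f_equal. f_equal; lia.
Qed.

Lemma Kl_prop k : In k Kl ->
  ((0 <= fst (fst k) <= 1)%Z /\ (0 <= snd (fst k) <= 1)%Z) /\ is_eta (snd k) = false.
Proof.
  unfold Kl. rewrite in_flat_map. intros [o [Ho Hk]]. apply in_map_iff in Hk.
  destruct Hk as [p [<- Hp]]. simpl. split.
  - simpl in Ho. repeat destruct Ho as [Ho|Ho]; subst; simpl; try lia; contradiction.
  - unfold bad in Hp. apply filter_In in Hp. destruct Hp as [_ Hp].
    destruct (is_eta p); simpl in *; congruence.
Qed.

Lemma core a b (nu : measure) : check1 a b = true ->
  (forall s, In s (configs (sq3 a b)) -> 0 <= nu s) ->
  sumR (map nu (configs (sq3 a b))) = 1 ->
  (forall k, In k Kl -> marg nu (sq3 a b) (Qo a b (fst k)) (xk a b k) = 0) -> False.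
Proof.
  intros Hc Hnn Hs Hm.
  set (S := sq3 a b) in *.
  assert (H0 : sumR (map (fun k => marg nu S (Qo a b (fst k)) (xk a b k)) Kl) = 0)
    by (apply sumR_zero; auto).
  assert (H1 : sumR (map nu (configs S)) <= sumR (map (fun s => sumR (map (fun k =>
      if agreeb (Qo a b (fst k)) s (xk a b k) then nu s else 0) Kl)) (configs S))).
  { apply sumR_le. intros s Hs'. apply inner_ge.
    - unfold check1 in Hc; rewrite forallb_forall in Hc; apply Hc; auto.
    - apply Hnn; auto. }
  assert (E : sumR (map (fun s => sumR (map (fun k =>
      if agreeb (Qo a b (fst k)) s (xk a b k) then nu s else 0) Kl)) (configs S))
      = sumR (map (fun k => marg nu S (Qo a b (fst k)) (xk a b k)) Kl)).
  { symmetry. exact (sumR_exchange (fun k s =>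
      if agreeb (Qo a b (fst k)) s (xk a b k) then nu s else 0) Kl (configs S)). }
  lra.
Qed.

Lemma in_sq3 a b x : In x (sq3 a b) -> (a <= fst x <= a+2 /\ b <= snd x <= b+2)%Z.
Proof.
  unfold sq3; simpl. intros H.
  repeat destruct H as [H|H]; subst; simpl; try lia; contradiction.
Qed.

Lemma part2 : forall a b : Z, incl Lam (sq3 a b) ->
     ~ exists nu : measure,
         is_prob nu (sq3 a b) /\
         (forall i j : Z, (0 <= i <= 1)%Z -> (0 <= j <= 1)%Z ->
            forall xi : config,
              marg nu (sq3 a b) (map (vadd ((a + i)%Z, (b + j)%Z)) Lam) xi
              = mu (tshift xi ((a + i)%Z, (b + j)%Z))).
Proof.
  intros a b Hincl [nu [[Hnn Hs] Hm]].
  assert (h1 : In (0,0)%Z (sq3 a b)) by (apply Hincl; simpl; tauto).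
  assert (h2 : In (1,1)%Z (sq3 a b)) by (apply Hincl; simpl; tauto).
  apply in_sq3 in h1. apply in_sq3 in h2.
  simpl in h1, h2.
  assert (Hm' : forall k, In k Kl -> marg nu (sq3 a b) (Qo a b (fst k)) (xk a b k) = 0).
  { intros k Hk. destruct (Kl_prop k Hk) as [[Hi Hj] Hb].
    unfold Qo, xk, vof. rewrite (Hm _ _ Hi Hj). rewrite tshift_unshift.
    apply mu_zero; auto. }
  assert (Ha : (a = -1 \/ a = 0)%Z) by lia.
  assert (Hb : (b = -1 \/ b = 0)%Z) by lia.
  destruct Ha as [-> | ->]; destruct Hb as [-> | ->];
    (refine (core _ _ nu _ Hnn Hs Hm'); vm_compute; reflexivity).
Qed.

Fixpoint nodupb (l : list site) : bool :=
  match l with [] => true | x :: l' => negb (inb x l') && nodupb l' end.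

Lemma nodupb_spec l : nodupb l = true -> NoDup l.
Proof.
  induction l as [|x l IH]; simpl; intros H; [constructor|].
  apply andb_true_iff in H. destruct H as [H1 H2]. constructor; auto.
  intro Hin. apply inb_In in Hin. rewrite Hin in H1. discriminate.
Qed.

Definition inclb (l1 l2 : list site) : bool := forallb (fun x => inb x l2) l1.

Lemma inclb_spec l1 l2 : inclb l1 l2 = true <-> incl l1 l2.
Proof.
  unfold inclb, incl. rewrite forallb_forall. split; intros H x Hx.
  - apply inb_In; auto.
  - apply inb_In; auto.
Qed.

Lemma marg_mu_bad p : is_eta p = false -> marg mu Lam Lam p = 0.
Proof.
  intros Hp. unfold marg. apply sumR_zero. intros s _.
  destruct (agreeb Lam s p) eqn:E; [|reflexivity].
  apply mu_zero. rewrite (is_eta_agree s p E). auto.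
Qed.

Lemma part3 : ~ TIExtension mu.
Proof.
  intros [P [H1 [H2 [H3 [H4 [H5 [H6 H7]]]]]]].
  assert (HS : NoDup (sq3 0 0)) by (apply nodupb_spec; vm_compute; reflexivity).
  assert (Hloc : forall s xi, P (sq3 0 0) (merge (sq3 0 0) s xi) = P (sq3 0 0) s).
  { intros s xi. apply H4. intros x Hx. unfold merge.
    rewrite (proj2 (inb_In x (sq3 0 0)) Hx). reflexivity. }
  assert (Hsum : sumR (map (P (sq3 0 0)) (configs (sq3 0 0))) = 1).
  { pose proof (G P H3 H5 (sq3 0 0) HS [] [] (fun _ => false) (incl_nil_l _)
                  (fun x _ H => H)) as HG.
    rewrite app_nil_r in HG. cbn [app] in HG. rewrite H2 in HG. rewrite <- HG.
    f_equal. apply map_ext. intros s. cbn [agreeb forallb]. symmetry. apply Hloc. }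
  assert (Hmarg : forall k, In k Kl ->
            marg (P (sq3 0 0)) (sq3 0 0) (Qo 0 0 (fst k)) (xk 0 0 k) = 0).
  { intros k Hk. destruct (Kl_prop k Hk) as [[Hi Hj] Hb].
    assert (Hinc : incl (Qo 0 0 (fst k)) (sq3 0 0)).
    { apply inclb_spec. destruct (fst k) as [i j]. simpl in Hi, Hj.
      assert (Hi' : (i = 0 \/ i = 1)%Z) by lia. assert (Hj' : (j = 0 \/ j = 1)%Z) by lia.
      destruct Hi' as [-> | ->]; destruct Hj' as [-> | ->]; vm_compute; reflexivity. }
    pose proof (G P H3 H5 (sq3 0 0) HS (Qo 0 0 (fst k)) [] (xk 0 0 k) Hinc
                  (fun x _ H => H)) as HG.
    rewrite !app_nil_r in HG.
    transitivity (P (Qo 0 0 (fst k)) (xk 0 0 k)).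
    { rewrite <- HG. unfold marg. f_equal. apply map_ext. intros s.
      destruct (agreeb (Qo 0 0 (fst k)) s (xk 0 0 k)); [symmetry; apply Hloc | reflexivity]. }
    unfold Qo. rewrite H6, H7. unfold xk. rewrite tshift_unshift.
    apply marg_mu_bad; auto. }
  refine (core 0 0 (P (sq3 0 0)) _ (fun s _ => H1 _ s) Hsum Hmarg).
  vm_compute; reflexivity.
Qed.

Fixpoint natsum (l : list nat) : nat :=
  match l with [] => 0%nat | x :: l' => (x + natsum l')%nat end.

Definition cnt (s : config) : nat :=
  ((if agreeb Lam s eta1 then 1 else 0) + (if agreeb Lam s eta2 then 1 else 0)
   + (if agreeb Lam s eta3 then 1 else 0) + (if agreeb Lam s eta4 then 1 else 0))%nat.

Definition margN (C : list site) (z : config) : nat :=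
  natsum (map (fun s => if agreeb C s z then cnt s else 0%nat) (configs Lam)).

Lemma marg_mu_N C z : marg mu Lam C z = / 4 * INR (margN C z).
Proof.
  unfold marg, margN. generalize (configs Lam) as L. intros L.
  induction L as [|s L IH]; simpl; [lra|].
  rewrite plus_INR, IH. destruct (agreeb C s z); [|simpl; lra].
  unfold mu, cnt.
  destruct (agreeb Lam s eta1), (agreeb Lam s eta2), (agreeb Lam s eta3),
    (agreeb Lam s eta4); simpl; lra.
Qed.

Fixpoint subs (l : list site) : list (list site) :=
  match l with [] => [[]] | x :: l' => map (cons x) (subs l') ++ subs l' end.

Lemma filter_in_subs f l : In (filter f l) (subs l).
Proof.
  induction l as [|a l IH]; simpl; [left; auto|].
  destruct (f a); apply in_or_app; [left; apply in_map; auto | right; auto].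
Qed.

Definition Vl : list site :=
  [(-1,-1);(-1,0);(-1,1);(0,-1);(0,0);(0,1);(1,-1);(1,0);(1,1)]%Z.

Lemma Lam_bounds x : In x Lam -> (0 <= fst x <= 1 /\ 0 <= snd x <= 1)%Z.
Proof.
  simpl. intros H. repeat destruct H as [H|H]; subst; simpl; try lia; contradiction.
Qed.

Lemma v_in_Vl v b : In b Lam -> In (vadd v b) Lam -> In v Vl.
Proof.
  intros Hb Hvb. apply Lam_bounds in Hb. apply Lam_bounds in Hvb.
  destruct v as [v1 v2], b as [b1 b2]. unfold vadd in Hvb; simpl in *.
  assert (H1 : (v1 = -1 \/ v1 = 0 \/ v1 = 1)%Z) by lia.
  assert (H2 : (v2 = -1 \/ v2 = 0 \/ v2 = 1)%Z) by lia.
  destruct H1 as [ -> | [ -> | -> ] ]; destruct H2 as [ -> | [ -> | -> ] ]; simpl; tauto.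
Qed.

Definition lti_check : bool :=
  forallb (fun v => forallb (fun Bs => implb (inclb (map (vadd v) Bs) Lam)
    (forallb (fun z => Nat.eqb (margN (map (vadd v) Bs) z) (margN Bs (tshift z v)))
       (configs (map (vadd v) Bs)))) (subs Lam)) Vl.

Lemma lti_check_ok : lti_check = true.
Proof. vm_compute. reflexivity. Qed.

Lemma configs_exists C xi : exists s, In s (configs C) /\ forall x, In x C -> s x = xi x.
Proof.
  induction C as [|c C IH].
  - exists (fun _ => false). simpl. split; [left; reflexivity| intros; contradiction].
  - destruct IH as [s [Hs Hsx]]. exists (upd s c (xi c)). split.
    + simpl. apply in_flat_map. exists s. split; auto. destruct (xi c); simpl; auto.
    + intros x Hx. unfold upd. destruct (site_eqb x c) eqn:E.
      * apply site_eqb_spec in E. subst. auto.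
      * destruct Hx as [ -> | Hx]; [rewrite site_eqb_refl in E; discriminate| auto].
Qed.

Lemma vadd_comm x v : vadd x v = vadd v x.
Proof. destruct x, v. unfold vadd; simpl. f_equal; lia. Qed.

Lemma part1 : LTI mu Lam.
Proof.
  intros B v HB HBv xi.
  remember (filter (fun x => inb x B) Lam) as B' eqn:EB'.
  assert (HBB : forall x, In x B <-> In x B').
  { intros x. rewrite EB', filter_In, inb_In. split; [intros H; split; auto| tauto]. }
  assert (HMM : forall x, In x (map (vadd v) B) <-> In x (map (vadd v) B')).
  { intros x. rewrite !in_map_iff. split; intros [y [<- Hy]]; exists y; split; auto;
      apply HBB; auto. }
  destruct (configs_exists (map (vadd v) B') xi) as [z [Hz Hzx]].
  rewrite (marg_ext mu Lam (map (vadd v) B) (map (vadd v) B') xi z HMM).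
  2:{ intros x Hx. symmetry. apply Hzx. apply HMM; auto. }
  rewrite (marg_ext mu Lam B B' (tshift xi v) (tshift z v) HBB).
  2:{ intros x Hx. unfold tshift. rewrite vadd_comm. symmetry. apply Hzx.
      apply in_map. apply HBB; auto. }
  destruct B' as [|b rest].
  - simpl. apply marg_ext; [tauto | intros x []].
  - assert (HbB : In b B) by (apply HBB; left; auto).
    assert (HvV : In v Vl).
    { apply (v_in_Vl v b); [apply HB; auto| apply HBv; apply in_map; auto]. }
    pose proof lti_check_ok as Hc. unfold lti_check in Hc.
    rewrite forallb_forall in Hc. specialize (Hc v HvV).
    rewrite forallb_forall in Hc.
    assert (Hsub : In (b :: rest) (subs Lam)) by (rewrite EB'; apply filter_in_subs).
    specialize (Hc _ Hsub).
    assert (Hinc : inclb (map (vadd v) (b :: rest)) Lam = true).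
    { apply inclb_spec. intros x Hx. apply HBv. apply HMM; auto. }
    rewrite Hinc in Hc. cbn [implb] in Hc.
    rewrite forallb_forall in Hc. specialize (Hc z Hz). apply Nat.eqb_eq in Hc.
    rewrite !marg_mu_N, Hc. reflexivity.
Qed.

Theorem mainTheorem13 :
  LTI mu Lam /\
  (forall a b : Z, incl Lam (sq3 a b) ->
     ~ exists nu : measure,
         is_prob nu (sq3 a b) /\
         (forall i j : Z, (0 <= i <= 1)%Z -> (0 <= j <= 1)%Z ->
            forall xi : config,
              marg nu (sq3 a b) (map (vadd ((a + i)%Z, (b + j)%Z)) Lam) xi
              = mu (tshift xi ((a + i)%Z, (b + j)%Z)))) /\
  ~ TIExtension mu.
Proof.
  split; [exact part1 | split; [exact part2 | exact part3]].
Qed.
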